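(* Let $(\Gamma,\mathcal M)$ be a linear matrix problem with $\Gamma\subset k^{t\times t}$, and let the free and dependent positions and the coefficients $c^{(l,r)}_{ij}$ be as in the context. Then for every step-sequence $\underline n$, the space $\mathcal M_{\underline n\times\underline n}$ consists of all $\underline n\times\underline n$ matrices $[M_{ij}]_{i,j=1}^t$ whose free blocks are arbitrary and whose dependent blocks are given by $M_{lr}=\sum_{(i,j)\in\mathcal N_f}c^{(l,r)}_{ij}M_{ij}$ for $(l,r)\in\mathcal N_d$. Moreover, when Belitskiĭ's algorithm is applied to $M\in\mathcal M_{\underline n\times\underline n}$ with $\Lambda=\Gamma_{\underline n\times\underline n}$, at each step the block that is reduced (the first non-stable block of the current partition) is a subblock of a free block $M_{ij}$, $(i,j)\in\mathcal N_f$, of $M$.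
   Context: Throughout, $k$ is an algebraically closed field with a fixed linear order $\prec$. For $\underline n=(n_1,\dots,n_t)$, an $\underline n\times\underline n$ matrix is $M=[M_{ij}]$ with $M_{ij}\in k^{n_i\times n_j}$. A reduced $\underline n\times\underline n$ algebra is an algebra $\Lambda$ of $\underline n\times\underline n$ matrices for which there are an equivalence relation $\sim$ on $\{1,\dots,t\}$ and, for each pair of classes $(\mathcal I,\mathcal J)$, a system $\sum_{\mathcal I\ni i<j\in\mathcal J}c^{(l)}_{ij}x_{ij}=0$, such that $\Lambda$ is exactly the set of upper block-triangular $S$ with $S_{ii}=S_{jj}$ for $i\sim j$ and $\sum c^{(l)}_{ij}S_{ij}=0$. $\Lambda^*$: invertible elements. Weyr matrices: $W=W_{\{\lambda_1\}}\oplus\dots\oplus W_{\{\lambda_r\}}$, $\lambda_1\prec\dots\prec\lambda_r$, $W_{\{\lambda_i\}}$ block upper triangular with diagonal blocks $\lambda_iI_{m_{i1}},\dots,\lambda_iI_{m_{ik_i}}$ ($m_{i1}\ge\dots\ge m_{ik_i}\ge1$), superdiagonal blocks $\begin{bmatrix}I\\0\end{bmatrix}$, other blocks $0$; standard partition: for $W_{\{\lambda_i\}}$, block sizes $m_{i1}-m_{i2},\dots,m_{ik_i};\ m_{i2}-m_{i3},\dots,m_{ik_i};\dots;m_{ik_i}$ with zeros removed. Belitskiĭ's algorithm for $(M,\Lambda)$: a block $M_{ij}$ is stable if $(S^{-1}MS)_{ij}=M_{ij}$ for all $S\in\Lambda^*$ (then $M_{ij}=a_{ij}I$ if $i\sim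 j$, $M_{ij}=0=:a_{ij}$ otherwise). If all blocks are stable, stop. Else order blocks $M_{t1}<\dots<M_{tt}<M_{t-1,1}<\dots<M_{1t}$, take the first non-stable block $M_{lr}$ (this is the block reduced at this step), with classes $\mathcal I\ni l,\mathcal J\ni r$, and let $( * )$ be $a_{l1}S_{1r}+\dots+a_{l,r-1}S_{r-1,r}=S_{l,l+1}a_{l+1,r}+\dots+S_{lt}a_{tr}$. Case I ($( * )$ not implied by the equations of $\Lambda$ for $(\mathcal I,\mathcal J)$): $M'=S^{-1}MS$, $S\in\Lambda^*$ with identity diagonal blocks, $M'_{lr}=0$; partition unchanged. Case II ($( * )$ implied, $l\not\sim r$): $M'=S^{-1}MS$ with $M'_{lr}=\begin{bmatrix}0&I\\0&0\end{bmatrix}$; strips equivalent to $l$ (resp. $r$) subdivided conformally with the rows (resp. columns) of this block. Case III ($( * )$ implied, $l\sim r$): $M'=S^{-1}MS$ with $M'_{lr}$ a Weyr matrix; strips equivalent to $l$ subdivided by its standard partition. Then $\Lambda'=\{S\in\Lambda\mid(SM')_{lr}=(M'S)_{lr}\}$ (reduced for the refined partition); repeat with $(M',\Lambda')$ until all blocks are stable. Linear matrix problems. A basic matrix algebra is a subalgebra $\Gamma\subset k^{t\times t}$ (with $I_t$) of upper triangular matrices containing the diagonal part of each of its elements; it is a reduced $(1,\dots,1)\times(1,\dots,1)$ algebra with an equivalence relation $\sim$ and equations. A linear matrix problem is a pair $(\Gamma,\mathcal M)$, $\mathcal M\subset k^{t\times t}$ a subspace with $\Gamma\mathcal M,\mathcal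 M\Gamma\subset\mathcal M$; $\mathcal M$ is the set of all $[m_{ij}]$ satisfying a linear system whose equations each involve only unknowns $x_{ij}$ with $(i,j)\in\mathcal I\times\mathcal J$ for one pair of classes. A step-sequence is $\underline n$ with $n_i=n_j$ for $i\sim j$; $\Gamma_{\underline n\times\underline n}$ is the reduced $\underline n\times\underline n$ algebra with the same $\sim$ and equations as $\Gamma$; $\mathcal M_{\underline n\times\underline n}$ is the space of $\underline n\times\underline n$ matrices whose blocks satisfy the system defining $\mathcal M$ (with blocks $M_{ij}$ in place of $x_{ij}$). Free and dependent blocks. Order the unknowns as $x_{t1}\lhd x_{t2}\lhd\dots\lhd x_{tt}\lhd x_{t-1,1}\lhd\dots\lhd x_{t-1,t}\lhd\dots\lhd x_{1t}$. Gauss–Jordan elimination of the system defining $\mathcal M$, eliminating starting with the $\lhd$-last unknown, brings it to the form $x_{lr}=\sum_{(i,j)\in\mathcal N_f}c^{(l,r)}_{ij}x_{ij}$, $(l,r)\in\mathcal N_d$, where $\mathcal N_d\cup\mathcal N_f=\{1,\dots,t\}^2$, $\mathcal N_d\cap\mathcal N_f=\varnothing$, and $c^{(l,r)}_{ij}\ne0$ implies $i\sim l$, $j\sim r$ and $x_{ij}\lhd x_{lr}$. A block $M_{ij}$ of an $\underline n\times\underline n$ matrix is free if $(i,j)\in\mathcal N_f$ and dependent if $(i,j)\in\mathcal N_d$. *)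

(* Defs.v *)
From HB Require Import structures.
From mathcomp Require Import all_boot all_order all_algebra.
Set Implicit Arguments. Unset Strict Implicit. Unset Printing Implicit Defensive.
Import Order.TTheory GRing.Theory.
Local Open Scope ring_scope.

Section Defs.
Variable k : closedFieldType.

(* A partition is a sequence of strip sizes s; strip u occupies positions
   soff s u, ..., soff s u + sz s u - 1 (all indices 0-based). *)
Definition soff (s : seq nat) (u : nat) : nat := sumn (take u s).
Definition sz (s : seq nat) (u : nat) : nat := nth 0%N s u.
(* index of the strip containing position p *)
Definition sidx (s : seq nat) (p : nat) : nat :=
  count (fun u => sumn (take u.+1 s) <= p)%N (iota 0 (size s)).

(* entry (p,q) of a matrix, 0 out of range *)
Definition ent N (A : 'M[k]_N) (p q : nat) : k :=
  match (insub p : option 'I_N), (insub q : option 'I_N) with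
  | Some i, Some j => A i j
  | _, _ => 0
  end.

(* block (i,j) of A w.r.t. partition s, as a function of in-block offsets *)
Definition blk N (s : seq nat) (A : 'M[k]_N) (i j : nat) (a b : nat) : k :=
  ent A (soff s i + a) (soff s j + b).

(* equivalence E on 'I_t, equations of Gamma / of M given as coefficient
   matrices (equation c : sum_{ij} c i j x_ij = 0). *)
Definition Gamma t (E : rel 'I_t) (geqs : seq 'M[k]_t) (A : 'M[k]_t) : Prop :=
  (forall i j : 'I_t, (j < i)%N -> A i j = 0) /\
  (forall i j : 'I_t, E i j -> A i i = A j j) /\
  (forall c, c \in geqs -> \sum_(i : 'I_t) \sum_(j : 'I_t) c i j * A i j = 0).

Definition Mset t (meqs : seq 'M[k]_t) (m : 'M[k]_t) : Prop :=
  forall d, d \in meqs -> \sum_(i : 'I_t) \sum_(j : 'I_t) d i j * m i j = 0.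

Definition Gamma_nn t (E : rel 'I_t) (geqs : seq 'M[k]_t) (ns : seq nat)
  (S : 'M[k]_(sumn ns)) : Prop :=
  (forall i j : 'I_t, (j < i)%N -> forall a b, (a < sz ns i)%N -> (b < sz ns j)%N ->
      blk ns S i j a b = 0) /\
  (forall i j : 'I_t, E i j -> forall a b, (a < sz ns i)%N -> (b < sz ns i)%N ->
      blk ns S i i a b = blk ns S j j a b) /\
  (forall c, c \in geqs -> forall a b,
      (forall i j : 'I_t, c i j != 0 -> (a < sz ns i)%N && (b < sz ns j)%N) ->
      \sum_(i : 'I_t) \sum_(j : 'I_t) c i j * blk ns S i j a b = 0).

Definition M_nn t (meqs : seq 'M[k]_t) (ns : seq nat) (A : 'M[k]_(sumn ns)) : Prop :=
  forall d, d \in meqs -> forall a b,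
    (forall i j : 'I_t, d i j != 0 -> (a < sz ns i)%N && (b < sz ns j)%N) ->
    \sum_(i : 'I_t) \sum_(j : 'I_t) d i j * blk ns A i j a b = 0.

Definition lhd t (i j l r : 'I_t) : bool := (l < i)%N || ((i == l) && (j < r)%N).

Section Alg.
Variable N : nat.
Implicit Types (s : seq nat) (M S : 'M[k]_N) (L : 'M[k]_N -> Prop).

Definition stable s M L (i j : nat) : Prop :=
  forall S, L S -> S \in unitmx -> forall a b, (a < sz s i)%N -> (b < sz s j)%N ->
    blk s (invmx S *m M *m S) i j a b = blk s M i j a b.

Definition equivs s L (i j : nat) : Prop :=
  sz s i = sz s j /\
  forall S, L S -> forall a b, (a < sz s i)%N -> (b < sz s i)%N ->
    blk s S i i a b = blk s S j j a b.

(* (l,r) is the first non-stable block in the order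
   M_{t1} < ... < M_{tt} < M_{t-1,1} < ... < M_{1t} *)
Definition firstns s M L (l r : nat) : Prop :=
  (l < size s)%N /\ (r < size s)%N /\ ~ stable s M L l r /\
  forall l' r', (l' < size s)%N -> (r' < size s)%N ->
    ((l < l')%N \/ (l' = l /\ (r' < r)%N)) -> stable s M L l' r'.

(* the equation (star) is implied by (holds on) L:
   sum_{i<r} M_{li} S_{ir} = sum_{j>l} S_{lj} M_{jr} *)
Definition star s M L (l r : nat) : Prop :=
  forall S, L S -> forall a b, (a < sz s l)%N -> (b < sz s r)%N ->
    \sum_(i < r) \sum_(c < sz s i) blk s M l i a c * blk s S i r c b =
    \sum_(l.+1 <= j < size s) \sum_(c < sz s j) blk s S l j a c * blk s M j r c b.

Definition subdiv s (P1 : nat -> Prop) (parts1 : seq nat)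
    (P2 : nat -> Prop) (parts2 : seq nat) (s' : seq nat) : Prop :=
  exists parts : seq (seq nat),
    size parts = size s /\ s' = flatten parts /\
    forall i, (i < size s)%N ->
      (P1 i -> nth [::] parts i = filter (fun x => 0 < x)%N parts1) /\
      (P2 i -> nth [::] parts i = filter (fun x => 0 < x)%N parts2) /\
      (~ P1 i -> ~ P2 i -> nth [::] parts i = [:: sz s i]).

Definition Lnext s L M' (l r : nat) : 'M[k]_N -> Prop :=
  fun S => L S /\ forall a b, (a < sz s l)%N -> (b < sz s r)%N ->
    blk s (S *m M') l r a b = blk s (M' *m S) l r a b.

End Alg.

(* data: list of (lambda_i, [m_i1; ...; m_ik]) *)
Definition weyr1 (lam : k) (ms : seq nat) (p q : nat) : k :=
  let u := sidx ms p in let v := sidx ms q in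
  let a := (p - soff ms u)%N in let b := (q - soff ms v)%N in
  if (u == v) && (a == b) then lam
  else if (v == u.+1) && (a == b) then 1 else 0.

Definition weyr (data : seq (k * seq nat)) (p q : nat) : k :=
  let bs := map (fun d => sumn d.2) data in
  let u := sidx bs p in let v := sidx bs q in
  if u == v then weyr1 (nth 0 (map fst data) u) (nth [::] (map snd data) u)
                       (p - soff bs u) (q - soff bs u)
  else 0.

Definition weyr_ok (lt : rel k) (data : seq (k * seq nat)) : bool :=
  sorted lt (map fst data) &&
  all (fun d => (d.2 != [::]) && sorted geq d.2 && all (fun x => 0 < x)%N d.2) data.

Definition weyr_size (data : seq (k * seq nat)) : nat :=
  sumn (map (fun d => sumn d.2) data).

Definition std1 (ms : seq nat) : seq nat :=
  flatten [seq [seq (nth 0 ms j - nth 0 ms j.+1)%N | j <- iota i (size ms - i)]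
          | i <- iota 0 (size ms)].
Definition stdpart (data : seq (k * seq nat)) : seq nat :=
  filter (fun x => 0 < x)%N (flatten (map (fun d => std1 d.2) data)).

Definition bstep (lt : rel k) N (s : seq nat) (M : 'M[k]_N) (L : 'M[k]_N -> Prop)
    (s' : seq nat) (M' : 'M[k]_N) (L' : 'M[k]_N -> Prop) : Prop :=
  exists l r, firstns s M L l r /\ L' = Lnext s L M' l r /\
  exists S, L S /\ S \in unitmx /\ M' = invmx S *m M *m S /\
  [\/
      ~ star s M L l r /\
      (forall i a b, (i < size s)%N -> (a < sz s i)%N -> (b < sz s i)%N ->
          blk s S i i a b = (a == b)%:R) /\
      (forall a b, (a < sz s l)%N -> (b < sz s r)%N -> blk s M' l r a b = 0) /\
      s' = s,
      star s M L l r /\ ~ equivs s L l r /\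
      exists rk, (rk <= minn (sz s l) (sz s r))%N /\
      (forall a b, (a < sz s l)%N -> (b < sz s r)%N ->
          blk s M' l r a b = ((a < rk)%N && (b == sz s r - rk + a)%N)%:R) /\
      subdiv s (fun i => equivs s L i l) [:: rk; sz s l - rk]%N
               (fun i => equivs s L i r) [:: sz s r - rk; rk]%N s'
    |
      star s M L l r /\ equivs s L l r /\
      exists data, weyr_ok lt data /\ weyr_size data = sz s l /\
      (forall a b, (a < sz s l)%N -> (b < sz s r)%N ->
          blk s M' l r a b = weyr data a b) /\
      subdiv s (fun i => equivs s L i l) (stdpart data) (fun _ => False) [::] s'].

Inductive reach (lt : rel k) N (s0 : seq nat) (M0 : 'M[k]_N) (L0 : 'M[k]_N -> Prop)
  : seq nat -> 'M[k]_N -> ('M[k]_N -> Prop) -> Prop :=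
| reach0 : reach lt s0 M0 L0 s0 M0 L0
| reachS s M L s' M' L' : reach lt s0 M0 L0 s M L -> bstep lt s M L s' M' L' ->
    reach lt s0 M0 L0 s' M' L'.

End Defs.

(* Main.v *)
Require Import Defs.
From HB Require Import structures.
From mathcomp Require Import all_boot all_order all_algebra.
Import Order.TTheory GRing.Theory.
Local Open Scope ring_scope.
Set Implicit Arguments. Unset Strict Implicit.

Lemma soffS (s : seq nat) u : soff s u.+1 = (soff s u + sz s u)%N.
Proof.
rewrite /soff /sz; case: (ltnP u (size s)) => hu.
  by rewrite (take_nth 0%N hu) sumn_rcons.
by rewrite !take_oversize ?nth_default ?addn0 // (leq_trans hu).
Qed.

Lemma soff0 (s : seq nat) : soff s 0 = 0%N.
Proof. by rewrite /soff take0. Qed.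

Lemma soff_cons a (s : seq nat) u : soff (a :: s) u.+1 = (a + soff s u)%N.
Proof. by []. Qed.

Lemma sz_cons a (s : seq nat) u : sz (a :: s) u.+1 = sz s u.
Proof. by []. Qed.

Lemma soff_mono (s : seq nat) u v : (u <= v)%N -> (soff s u <= soff s v)%N.
Proof.
move=> /subnK <-; elim: (v - u)%N => [|d IH] //=.
by rewrite addSn soffS (leq_trans IH) ?leq_addr.
Qed.

Lemma soff_sum (s : seq nat) u : (soff s u <= sumn s)%N.
Proof.
by rewrite /soff -{2}(cat_take_drop u s) sumn_cat leq_addr.
Qed.

Lemma soffSsum (s : seq nat) u : (soff s u + sz s u <= sumn s)%N.
Proof. by rewrite -soffS soff_sum. Qed.

Lemma soff_size (s : seq nat) : soff s (size s) = sumn s.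
Proof. by rewrite /soff take_size. Qed.

Lemma sum_part (R : nmodType) (s : seq nat) (F : nat -> R) :
  \sum_(0 <= x < sumn s) F x = \sum_(u < size s) \sum_(c < sz s u) F (soff s u + c)%N.
Proof.
elim: s F => [|a s IH] F /=; first by rewrite big_geq // big_ord0.
rewrite (big_cat_nat _ (n := a)) ?leq_addr //= big_ord_recl /=.
congr (_ + _); first by rewrite big_mkord; apply: eq_bigr => c _; rewrite soff0.
rewrite -{1}(add0n a) big_addn addKn IH; apply: eq_bigr => u _.
by apply: eq_bigr => c _; rewrite /bump /= add1n soff_cons addnC addnA.
Qed.

Lemma ent_ord (k : closedFieldType) N (A : 'M[k]_N) (i j : 'I_N) : ent A i j = A i j.
Proof. by rewrite /ent !valK. Qed.

Lemma ent_outl (k : closedFieldType) N (A : 'M[k]_N) p q : (N <= p)%N -> ent A p q = 0.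
Proof. by move=> h; rewrite /ent insubN // -leqNgt. Qed.

Lemma ent_outr (k : closedFieldType) N (A : 'M[k]_N) p q : (N <= q)%N -> ent A p q = 0.
Proof.
move=> h; rewrite /ent; case: insub => // i.
by rewrite insubN // -leqNgt.
Qed.

Lemma ent_mul (k : closedFieldType) (s : seq nat) (A B : 'M[k]_(sumn s)) p q :
  (p < sumn s)%N -> (q < sumn s)%N ->
  ent (A *m B) p q = \sum_(u < size s) \sum_(c < sz s u)
      ent A p (soff s u + c) * ent B (soff s u + c) q.
Proof.
move=> hp hq.
rewrite -[p]/(val (Ordinal hp)) -[q]/(val (Ordinal hq)) ent_ord mxE.
rewrite -(@sum_part _ s (fun x => ent A (Ordinal hp) x * ent B x (Ordinal hq))).
rewrite big_mkord; apply: eq_bigr => x _; by rewrite !ent_ord.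
Qed.

Lemma blk_mul (k : closedFieldType) (s : seq nat) (A B : 'M[k]_(sumn s)) i j a b :
  (i < size s)%N -> (j < size s)%N -> (a < sz s i)%N -> (b < sz s j)%N ->
  blk s (A *m B) i j a b = \sum_(u < size s) \sum_(c < sz s u)
      blk s A i u a c * blk s B u j c b.
Proof.
move=> hi hj ha hb; rewrite /blk ent_mul //.
  by rewrite (leq_trans _ (soffSsum s i)) // ltn_add2l.
by rewrite (leq_trans _ (soffSsum s j)) // ltn_add2l.
Qed.

Definition sc (k : closedFieldType) (s : seq nat) (A : 'M[k]_(sumn s)) a b : 'M[k]_(size s) :=
  \matrix_(i, j) (if (a < sz s i)%N && (b < sz s j)%N then blk s A i j a b else 0).

Lemma sz_le_sum (s : seq nat) u : (sz s u <= sumn s)%N.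
Proof. by rewrite (leq_trans _ (soffSsum s u)) // leq_addl. Qed.

Lemma sc_mul (k : closedFieldType) (s : seq nat) (A B : 'M[k]_(sumn s)) a b :
  sc (A *m B) a b = \sum_(c < sumn s) (sc A a c *m sc B c b).
Proof.
apply/matrixP => i j; rewrite summxE mxE.
under [RHS]eq_bigr do rewrite mxE.
case: ifP => hab.
  case/andP: hab => ha hb.
  rewrite blk_mul //.
  rewrite exchange_big /=; apply: eq_bigr => u _.
  rewrite (big_ord_widen (sumn s) (fun c => blk s A i u a c * blk s B u j c b) (sz_le_sum s u)) big_mkcond /=.
  apply: eq_bigr => c _; rewrite !mxE ha hb /=.
  by case: (c < sz s u)%N; rewrite ?mulr0 ?mul0r.
rewrite big1 // => c _; rewrite big1 // => u _; rewrite !mxE.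
move: hab; case: (a < sz s i)%N => //=; first by move=> ->; rewrite andbF mulr0.
by move=> _; rewrite mul0r.
Qed.

Lemma sum_sc_blk (k : closedFieldType) (s : seq nat) (A : 'M[k]_(sumn s)) a b
  (d : 'M[k]_(size s)) :
  (forall i j : 'I_(size s), d i j != 0 -> (a < sz s i)%N && (b < sz s j)%N) ->
  \sum_(i : 'I_(size s)) \sum_(j : 'I_(size s)) d i j * blk s A i j a b =
  \sum_(i : 'I_(size s)) \sum_(j : 'I_(size s)) d i j * sc A a b i j.
Proof.
move=> h; apply: eq_bigr => i _; apply: eq_bigr => j _; rewrite mxE.
have [->|nz] := eqVneq (d i j) 0; first by rewrite !mul0r.
by rewrite (h _ _ nz).
Qed.

Lemma sum_sc_dich (k : closedFieldType) (s : seq nat) (E : rel 'I_(size s))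
  (hstep : forall i j : 'I_(size s), E i j -> sz s i = sz s j)
  (A : 'M[k]_(sumn s)) a b (d : 'M[k]_(size s)) (I J : 'I_(size s)) :
  (forall i j : 'I_(size s), d i j != 0 -> E i I /\ E j J) ->
  (forall i j : 'I_(size s), d i j != 0 -> (a < sz s i)%N && (b < sz s j)%N) \/
  \sum_(i : 'I_(size s)) \sum_(j : 'I_(size s)) d i j * sc A a b i j = 0.
Proof.
move=> hIJ.
case hr: ((a < sz s I)%N && (b < sz s J)%N).
  left => i j /hIJ [/hstep -> /hstep ->] //.
right; apply: big1 => i _; apply: big1 => j _.
have [->|nz] := eqVneq (d i j) 0; first by rewrite mul0r.
have [/hstep e1 /hstep e2] := hIJ _ _ nz.
by rewrite mxE e1 e2 hr mulr0.
Qed.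

Lemma Gamma_nn_sc (k : closedFieldType) (s : seq nat) (E : rel 'I_(size s))
  (geqs : seq 'M[k]_(size s))
  (geqs_ok : forall c, c \in geqs -> exists I J : 'I_(size s),
      forall i j : 'I_(size s), c i j != 0 -> [/\ E i I, E j J & (i < j)%N])
  (hstep : forall i j : 'I_(size s), E i j -> sz s i = sz s j)
  (S : 'M[k]_(sumn s)) :
  Gamma_nn E geqs S <-> forall a b, Gamma E geqs (sc S a b).
Proof.
split.
  move=> [h1 [h2 h3]] a b; split; [|split].
  - move=> i j ji; rewrite mxE; case: ifP => // /andP [ha hb]; exact: h1.
  - move=> i j e; rewrite !mxE (hstep _ _ e); case: ifP => // /andP [ha hb].
    by apply: h2 => //; rewrite (hstep _ _ e).
  - move=> c hc; have [I [J hIJ]] := geqs_ok c hc.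
    have hIJ' : forall i j : 'I_(size s), c i j != 0 -> E i I /\ E j J.
      by move=> i j /hIJ [].
    case: (sum_sc_dich hstep S a b hIJ') => // hr.
    by rewrite -sum_sc_blk // h3.
move=> h; split; [|split].
- move=> i j ji a b ha hb; have [h1 _] := h a b.
  by have := h1 _ _ ji; rewrite mxE ha hb.
- move=> i j e a b ha hb; have [_ [h2 _]] := h a b.
  by have := h2 _ _ e; rewrite !mxE -(hstep _ _ e) ha hb.
- move=> c hc a b hr; have [_ [_ h3]] := h a b.
  by rewrite sum_sc_blk // h3.
Qed.

Lemma M_nn_sc (k : closedFieldType) (s : seq nat) (E : rel 'I_(size s))
  (meqs : seq 'M[k]_(size s))
  (meqs_ok : forall d, d \in meqs -> exists I J : 'I_(size s),
      forall i j : 'I_(size s), d i j != 0 -> E i I /\ E j J)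
  (hstep : forall i j : 'I_(size s), E i j -> sz s i = sz s j)
  (A : 'M[k]_(sumn s)) :
  M_nn meqs A <-> forall a b, Mset meqs (sc A a b).
Proof.
split.
  move=> h a b d hd; have [I [J hIJ]] := meqs_ok d hd.
  case: (sum_sc_dich hstep A a b hIJ) => // hr.
  by rewrite -sum_sc_blk // h.
move=> h d hd a b hr; by rewrite sum_sc_blk // h.
Qed.

Lemma Gamma0 (k : closedFieldType) t (E : rel 'I_t) geqs : Gamma E geqs (0 : 'M[k]_t).
Proof.
split; [|split].
- by move=> i j _; rewrite mxE.
- by move=> i j _; rewrite !mxE.
- by move=> c _; apply: big1 => i _; apply: big1 => j _; rewrite mxE mulr0.
Qed.

Lemma GammaD (k : closedFieldType) t (E : rel 'I_t) geqs (A B : 'M[k]_t) :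
  Gamma E geqs A -> Gamma E geqs B -> Gamma E geqs (A + B).
Proof.
move=> [a1 [a2 a3]] [b1 [b2 b3]]; split; [|split].
- by move=> i j h; rewrite mxE a1 // b1 // addr0.
- by move=> i j h; rewrite !mxE (a2 _ _ h) (b2 _ _ h).
- move=> c hc.
  rewrite (eq_bigr (fun i => \sum_j c i j * A i j + \sum_j c i j * B i j)).
    by rewrite big_split /= a3 // b3 // addr0.
  by move=> i _; rewrite -big_split; apply: eq_bigr => j _; rewrite mxE mulrDr.
Qed.

Lemma GammaZ (k : closedFieldType) t (E : rel 'I_t) geqs x (A : 'M[k]_t) :
  Gamma E geqs A -> Gamma E geqs (x *: A).
Proof.
move=> [a1 [a2 a3]]; split; [|split].
- by move=> i j h; rewrite mxE a1 // mulr0.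
- by move=> i j h; rewrite !mxE (a2 _ _ h).
- move=> c hc.
  rewrite (eq_bigr (fun i => x * \sum_j c i j * A i j)).
    by rewrite -mulr_sumr a3 // mulr0.
  by move=> i _; rewrite mulr_sumr; apply: eq_bigr => j _; rewrite mxE mulrCA.
Qed.

Lemma Gamma_sum (k : closedFieldType) t (E : rel 'I_t) geqs n (F : 'I_n -> 'M[k]_t) :
  (forall i, Gamma E geqs (F i)) -> Gamma E geqs (\sum_i F i).
Proof.
move=> h; apply: (big_ind (Gamma E geqs)) => //; [exact: Gamma0| exact: GammaD].
Qed.

Lemma Mset0 (k : closedFieldType) t meqs : Mset meqs (0 : 'M[k]_t).
Proof. by move=> d _; apply: big1 => i _; apply: big1 => j _; rewrite mxE mulr0. Qed.

Lemma MsetD (k : closedFieldType) t meqs (A B : 'M[k]_t) :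
  Mset meqs A -> Mset meqs B -> Mset meqs (A + B).
Proof.
move=> a3 b3 c hc.
rewrite (eq_bigr (fun i => \sum_j c i j * A i j + \sum_j c i j * B i j)).
  by rewrite big_split /= a3 // b3 // addr0.
by move=> i _; rewrite -big_split; apply: eq_bigr => j _; rewrite mxE mulrDr.
Qed.

Lemma Mset_sum (k : closedFieldType) t meqs n (F : 'I_n -> 'M[k]_t) :
  (forall i, Mset meqs (F i)) -> Mset meqs (\sum_i F i).
Proof.
move=> h; apply: (big_ind (Mset meqs)) => //; [exact: Mset0| exact: MsetD].
Qed.

Lemma ent_add (k : closedFieldType) N (A B : 'M[k]_N) p q :
  ent (A + B) p q = ent A p q + ent B p q.
Proof.
rewrite /ent; case: (insub p : option 'I_N) => [i|]; case: (insub q : option 'I_N) => [j|];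
  by rewrite ?mxE ?addr0.
Qed.

Lemma ent_scale (k : closedFieldType) N x (A : 'M[k]_N) p q :
  ent (x *: A) p q = x * ent A p q.
Proof.
rewrite /ent; case: (insub p : option 'I_N) => [i|]; case: (insub q : option 'I_N) => [j|];
  by rewrite ?mxE ?mulr0.
Qed.

Lemma sc_add (k : closedFieldType) (s : seq nat) (A B : 'M[k]_(sumn s)) a b :
  sc (A + B) a b = sc A a b + sc B a b.
Proof.
apply/matrixP => i j; rewrite !mxE /blk ent_add; by case: ifP; rewrite ?addr0.
Qed.

Lemma sc_scale (k : closedFieldType) (s : seq nat) x (A : 'M[k]_(sumn s)) a b :
  sc (x *: A) a b = x *: sc A a b.
Proof.
apply/matrixP => i j; rewrite !mxE /blk ent_scale; by case: ifP; rewrite ?mulr0.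
Qed.

Lemma pos_lt (s : seq nat) (i j : nat) a b :
  (i < j)%N -> (a < sz s i)%N -> (soff s i + a < soff s j + b)%N.
Proof.
move=> ij ha; apply: (@leq_trans (soff s i.+1)); first by rewrite soffS ltn_add2l.
by rewrite (leq_trans (soff_mono s ij)) ?leq_addr.
Qed.

Lemma ent1 (k : closedFieldType) N p q :
  ent (1%:M : 'M[k]_N) p q = ((p < N)%N && (p == q))%:R.
Proof.
rewrite /ent; case: insubP => [i _ <-|/negbTE ->] //.
case: insubP => [j _ <-|/negbTE hq]; first by rewrite mxE ltn_ord.
rewrite ltn_ord /=; case: eqP => // e; by rewrite -e ltn_ord in hq.
Qed.

Lemma Gamma_sc1 (k : closedFieldType) (s : seq nat) (E : rel 'I_(size s))
  (geqs : seq 'M[k]_(size s))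
  (geqs_ok : forall c, c \in geqs -> exists I J : 'I_(size s),
      forall i j : 'I_(size s), c i j != 0 -> [/\ E i I, E j J & (i < j)%N])
  (hstep : forall i j : 'I_(size s), E i j -> sz s i = sz s j) a b :
  Gamma E geqs (sc (1%:M : 'M[k]_(sumn s)) a b).
Proof.
have off0 : forall (i j : 'I_(size s)), (i < j)%N -> (a < sz s i)%N ->
    blk s (1%:M : 'M[k]_(sumn s)) i j a b = 0.
  move=> i j ij ha; rewrite /blk ent1.
  by rewrite (ltn_eqF (@pos_lt s i j a b ij ha)) andbF.
split; [|split].
- move=> i j ji; rewrite mxE; case: ifP => // /andP [ha hb].
  rewrite /blk ent1; by rewrite eq_sym (ltn_eqF (@pos_lt s j i b a ji hb)) andbF.
- move=> i j e; rewrite !mxE -(hstep _ _ e); case: ifP => // /andP [ha hb].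
  rewrite /blk !ent1 !eqn_add2l.
  rewrite (leq_trans _ (soffSsum s i)) ?ltn_add2l //.
  by rewrite (leq_trans _ (soffSsum s j)) ?ltn_add2l // -(hstep _ _ e).
- move=> c hc; have [I [J hIJ]] := geqs_ok c hc.
  apply: big1 => i _; apply: big1 => j _.
  have [->|nz] := eqVneq (c i j) 0; first by rewrite mul0r.
  have [_ _ ij] := hIJ _ _ nz.
  rewrite mxE; case: ifP => [/andP [ha hb]|]; last by rewrite mulr0.
  by rewrite off0 // mulr0.
Qed.
Lemma inv_closed (k : fieldType) N (P : 'M[k]_N -> Prop) :
  (forall A B, P A -> P B -> P (A + B)) ->
  (forall x A, P A -> P (x *: A)) ->
  (forall A B, P A -> P B -> P (A *m B)) ->
  P 1%:M ->
  forall S, P S -> S \in unitmx -> P (invmx S).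
Proof.
case: N P => [|n] P hD hZ hM h1 S hS hu.
  by have -> : invmx S = S by apply/matrixP => i; case: i.
have hpoly : forall q, P (horner_mx S q).
  elim/poly_ind => [|q c IH].
    by rewrite rmorph0 -(scale0r (1%:M : 'M[k]_n.+1)); apply: hZ.
  rewrite rmorphD rmorphM /= horner_mx_X horner_mx_C -mulmxE.
  by apply: hD; [apply: hM | rewrite -scalemx1; apply: hZ].
set p := char_poly S.
have CH : horner_mx S p = 0 := Cayley_Hamilton S.
have ht : take_poly 1 p = (p`_0)%:P.
  by apply/polyP => i; rewrite coefE coefC; case: i.
have e : p = (p`_0)%:P + drop_poly 1 p * 'X.
  by rewrite -ht -['X]expr1 poly_take_drop.
have hp0 : p`_0 != 0.
  rewrite char_poly_det mulf_neq0 ?signr_eq0 //.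
  by rewrite -unitfE -unitmxE.
set Q := horner_mx S (drop_poly 1 p).
have eQ : (- (p`_0)^-1 *: Q) *m S = 1%:M.
  move: CH; rewrite {1}e rmorphD rmorphM /= horner_mx_X horner_mx_C -mulmxE -/Q.
  move=> /eqP; rewrite addrC addr_eq0 => /eqP eQS.
  by rewrite -scalemxAl eQS scaleNr scalerN opprK scale_scalar_mx mulVf.
have -> : invmx S = - (p`_0)^-1 *: Q.
  by rewrite -[LHS]mul1mx -eQ -mulmxA mulmxV // mulmx1.
by apply: hZ; apply: hpoly.
Qed.

Section GammaNN.
Variables (k : closedFieldType) (s : seq nat) (E : rel 'I_(size s)).
Variable (geqs : seq 'M[k]_(size s)).
Hypothesis geqs_ok : forall c, c \in geqs -> exists I J : 'I_(size s),
      forall i j : 'I_(size s), c i j != 0 -> [/\ E i I, E j J & (i < j)%N].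
Hypothesis hstep : forall i j : 'I_(size s), E i j -> sz s i = sz s j.
Hypothesis Gamma_mul : forall A B, Gamma E geqs A -> Gamma E geqs B -> Gamma E geqs (A *m B).
Variable (meqs : seq 'M[k]_(size s)).
Hypothesis meqs_ok : forall d, d \in meqs -> exists I J : 'I_(size s),
      forall i j : 'I_(size s), d i j != 0 -> E i I /\ E j J.
Hypothesis GM : forall A m, Gamma E geqs A -> Mset meqs m -> Mset meqs (A *m m).
Hypothesis MG : forall A m, Gamma E geqs A -> Mset meqs m -> Mset meqs (m *m A).

Let GN := Gamma_nn_sc geqs_ok hstep.
Let MN := M_nn_sc meqs_ok hstep.

Lemma GNmul (S T : 'M[k]_(sumn s)) :
  Gamma_nn E geqs S -> Gamma_nn E geqs T -> Gamma_nn E geqs (S *m T).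
Proof.
move=> /GN hS /GN hT; apply/GN => a b; rewrite sc_mul.
by apply: Gamma_sum => c; apply: Gamma_mul.
Qed.

Lemma GNadd (S T : 'M[k]_(sumn s)) :
  Gamma_nn E geqs S -> Gamma_nn E geqs T -> Gamma_nn E geqs (S + T).
Proof.
by move=> /GN hS /GN hT; apply/GN => a b; rewrite sc_add; apply: GammaD.
Qed.

Lemma GNscale x (S : 'M[k]_(sumn s)) :
  Gamma_nn E geqs S -> Gamma_nn E geqs (x *: S).
Proof. by move=> /GN hS; apply/GN => a b; rewrite sc_scale; apply: GammaZ. Qed.

Lemma GN1 : Gamma_nn E geqs (1%:M : 'M[k]_(sumn s)).
Proof. by apply/GN => a b; apply: Gamma_sc1. Qed.

Lemma GNinv (S : 'M[k]_(sumn s)) :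
  Gamma_nn E geqs S -> S \in unitmx -> Gamma_nn E geqs (invmx S).
Proof.
move=> hS hu; have := @inv_closed k (sumn s) (fun S => @Gamma_nn k (size s) E geqs s S).
apply.
- exact: GNadd. - exact: GNscale. - exact: GNmul. - exact: GN1.
- exact: hS. - exact: hu.
Qed.

Lemma MNl (S A : 'M[k]_(sumn s)) :
  Gamma_nn E geqs S -> M_nn meqs A -> M_nn meqs (S *m A).
Proof.
move=> /GN hS /MN hA; apply/MN => a b; rewrite sc_mul.
by apply: Mset_sum => c; apply: GM.
Qed.

Lemma MNr (S A : 'M[k]_(sumn s)) :
  Gamma_nn E geqs S -> M_nn meqs A -> M_nn meqs (A *m S).
Proof.
move=> /GN hS /MN hA; apply/MN => a b; rewrite sc_mul.
by apply: Mset_sum => c; apply: MG.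
Qed.

Lemma MNconj (S A : 'M[k]_(sumn s)) :
  Gamma_nn E geqs S -> S \in unitmx -> M_nn meqs A -> M_nn meqs (invmx S *m A *m S).
Proof.
move=> hS hu hA; apply: MNr => //; apply: MNl => //; exact: GNinv.
Qed.

End GammaNN.

Section Part1.
Variables (k : closedFieldType) (s : seq nat) (E : rel 'I_(size s)).
Hypothesis hstep : forall i j : 'I_(size s), E i j -> sz s i = sz s j.
Variables (Nd : rel 'I_(size s)) (c : 'I_(size s) -> 'I_(size s) -> 'M[k]_(size s)).
Hypothesis hc : forall l r i j : 'I_(size s), Nd l r -> ~~ Nd i j -> c l r i j != 0 ->
      [/\ E i l, E j r & lhd i j l r].

Lemma part1_pt (A : 'M[k]_(sumn s)) a b (l r : 'I_(size s)) : Nd l r ->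
  (sc A a b l r = \sum_(i : 'I_(size s)) \sum_(j : 'I_(size s) | ~~ Nd i j)
       c l r i j * sc A a b i j) <->
  ((a < sz s l)%N -> (b < sz s r)%N -> blk s A l r a b =
     \sum_(i : 'I_(size s)) \sum_(j : 'I_(size s) | ~~ Nd i j) c l r i j * blk s A i j a b).
Proof.
move=> hN.
have hsum : \sum_(i : 'I_(size s)) \sum_(j : 'I_(size s) | ~~ Nd i j)
       c l r i j * sc A a b i j =
    if (a < sz s l)%N && (b < sz s r)%N then
     \sum_(i : 'I_(size s)) \sum_(j : 'I_(size s) | ~~ Nd i j) c l r i j * blk s A i j a b
    else 0.
  case: ifP => hr.
    apply: eq_bigr => i _; apply: eq_bigr => j hj.
    have [->|nz] := eqVneq (c l r i j) 0; first by rewrite !mul0r.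
    have [/hstep e1 /hstep e2 _] := hc hN hj nz.
    by rewrite mxE e1 e2 hr.
  apply: big1 => i _; apply: big1 => j hj.
  have [->|nz] := eqVneq (c l r i j) 0; first by rewrite mul0r.
  have [/hstep e1 /hstep e2 _] := hc hN hj nz.
  by rewrite mxE e1 e2 hr mulr0.
rewrite hsum mxE; case: ifP => hr.
  case/andP: hr => ha hb; split; [by move=> -> | by move=> h; apply: h].
split => // _ ha hb; by rewrite ha hb in hr.
Qed.

End Part1.

From mathcomp Require Import zify.

Definition refines (s' s : seq nat) : Prop :=
  sumn s' = sumn s /\
  forall v, (v < size s')%N -> (0 < sz s' v)%N -> exists2 u, (u < size s)%N &
    (soff s u <= soff s' v)%N /\ (soff s' v + sz s' v <= soff s u + sz s u)%N.

Lemma refines_refl s : refines s s.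
Proof. split => // v hv _; exists v => //; lia. Qed.

Lemma refines_trans s1 s2 s3 : refines s1 s2 -> refines s2 s3 -> refines s1 s3.
Proof.
move=> [e12 h12] [e23 h23]; split; first by rewrite e12.
move=> v hv hpos; have [v' hv' [i1 i2]] := h12 v hv hpos.
have hpos' : (0 < sz s2 v')%N by lia.
have [u hu [j1 j2]] := h23 v' hv' hpos'.
exists u => //; lia.
Qed.

Lemma soff_catl (p F : seq nat) v : (v < size p)%N -> soff (p ++ F) v = soff p v.
Proof. by move=> hv; rewrite /soff take_cat hv. Qed.

Lemma sz_catl (p F : seq nat) v : (v < size p)%N -> sz (p ++ F) v = sz p v.
Proof. by move=> hv; rewrite /sz nth_cat hv. Qed.

Lemma soff_catr (p F : seq nat) w : soff (p ++ F) (size p + w) = (sumn p + soff F w)%N.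
Proof.
rewrite /soff take_cat ltnNge leq_addr /= addKn sumn_cat //.
Qed.

Lemma sz_catr (p F : seq nat) w : sz (p ++ F) (size p + w) = sz F w.
Proof. by rewrite /sz nth_cat ltnNge leq_addr /= addKn. Qed.

Lemma refines_flatten (parts : seq (seq nat)) :
  refines (flatten parts) (map sumn parts).
Proof.
elim: parts => [|p ps [IHs IH]] /=; first by split.
split; first by rewrite sumn_cat IHs.
move=> v hv hpos; case: (ltnP v (size p)) => hvp.
  exists 0%N => //; rewrite soff0 soff_catl // sz_catl //; split => //.
  by rewrite -soffS /sz /= soff_sum.
have ev := subnKC hvp; move: hv hpos; rewrite -ev soff_catr sz_catr size_cat ltn_add2l.
move=> hw hpos; have [u hu [i1 i2]] := IH _ hw hpos.
exists u.+1; first by [].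
rewrite soff_cons /sz /=; rewrite /sz in i2 hpos; lia.
Qed.

Lemma sumn_filter_pos (x : seq nat) : sumn (filter (fun y => 0 < y)%N x) = sumn x.
Proof. by elim: x => //= a x IH; case: a => //= a; rewrite IH. Qed.

Lemma tele (f : nat -> nat) i d :
  (forall j, (i <= j)%N -> (j < i + d)%N -> (f j.+1 <= f j)%N) ->
  sumn [seq (f j - f j.+1)%N | j <- iota i d] = (f i - f (i + d))%N /\
  (f (i + d) <= f i)%N.
Proof.
elim: d i => [|d IH] i h /=; first by rewrite addn0 subnn.
have [e1 e2] : sumn [seq (f j - f j.+1)%N | j <- iota i.+1 d] = (f i.+1 - f (i.+1 + d))%N /\
  (f (i.+1 + d) <= f i.+1)%N.
  by apply: IH => j hj1 hj2; apply: h; [exact: ltnW | by rewrite -addSnnS].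
have h0 : (f i.+1 <= f i)%N by apply: h; rewrite ?leqnn ?addnS ?ltnS ?leq_addr.
rewrite e1 addSnnS; rewrite addSnnS in e2; split; lia.
Qed.

Lemma geq_tr : transitive geq.
Proof. by move=> a b c h1 h2; exact: leq_trans h2 h1. Qed.

Lemma sumn_std1 (ms : seq nat) : sorted geq ms -> sumn (std1 ms) = sumn ms.
Proof.
move=> hs; rewrite /std1 sumn_flatten -map_comp.
rewrite -[in RHS](mkseq_nth 0%N ms) /mkseq; congr sumn; apply/eq_in_map => i.
rewrite mem_iota add0n => /andP [_ hi] /=.
have ht : forall j, (i <= j)%N -> (j < i + (size ms - i))%N ->
    (nth 0%N ms j.+1 <= nth 0%N ms j)%N.
  move=> j hij hj; rewrite subnKC ?(ltnW hi) // in hj.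
  case: (ltnP j.+1 (size ms)) => hj1; last by rewrite nth_default.
  have := @sorted_leq_nth _ geq geq_tr leqnn 0%N ms hs j j.+1.
  by rewrite !inE hj hj1 leqnSn => /(_ isT isT isT).
have [e _] := tele ht.
rewrite /= e subnKC; last exact: ltnW.
by rewrite (nth_default _ (leqnn (size ms))) subn0.
Qed.

Lemma sumn_stdpart (k : closedFieldType) (lt : rel k) (data : seq (k * seq nat)) :
  weyr_ok lt data -> sumn (stdpart data) = weyr_size data.
Proof.
case/andP => _ /allP hall.
rewrite /stdpart sumn_filter_pos sumn_flatten -map_comp /weyr_size.
congr sumn; apply/eq_in_map => d hd /=; apply: sumn_std1.
by have /andP [/andP [_ ->] _] := hall d hd.
Qed.

From Stdlib Require Import Classical_Prop.

Lemma subdiv_refines (s : seq nat) (P1 : nat -> Prop) parts1 (P2 : nat -> Prop) parts2 s' :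
  (forall i, (i < size s)%N -> P1 i -> sumn parts1 = sz s i) ->
  (forall i, (i < size s)%N -> P2 i -> sumn parts2 = sz s i) ->
  subdiv s P1 parts1 P2 parts2 s' -> refines s' s.
Proof.
move=> h1 h2 [parts [hsz [-> h]]].
have -> : s = map sumn parts.
  apply: (@eq_from_nth _ 0%N); first by rewrite size_map hsz.
  move=> i hi; rewrite (nth_map [::]) ?hsz //.
  have [h1' [h2' h3']] := h i hi.
  case: (classic (P1 i)) => p1.
    by rewrite h1' // sumn_filter_pos (h1 i hi p1).
  case: (classic (P2 i)) => p2.
    by rewrite h2' // sumn_filter_pos (h2 i hi p2).
  by rewrite h3' //= addn0.
exact: refines_flatten.
Qed.

Lemma locate (s : seq nat) P : (P < sumn s)%N ->
  exists2 v, (v < size s)%N & (soff s v <= P)%N /\ (P < soff s v + sz s v)%N.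
Proof.
elim: s P => [|a s IH] P //= hP.
case: (ltnP P a) => hPa.
  by exists 0%N => //; rewrite soff0 /sz /=.
have hPa' : (P - a < sumn s)%N by lia.
have [v hv [h1 h2]] := IH (P - a)%N hPa'.
exists v.+1; first by [].
rewrite soff_cons /sz /=; rewrite /sz in h2; lia.
Qed.

Lemma strip_lt (s : seq nat) u v : (u < v)%N -> (soff s u + sz s u <= soff s v)%N.
Proof. by move=> h; rewrite -soffS soff_mono. Qed.

Section Main.
Variables (k : closedFieldType) (lt : rel k) (s : seq nat) (E : rel 'I_(size s)).
Variable (geqs : seq 'M[k]_(size s)).
Hypothesis geqs_ok : forall c, c \in geqs -> exists I J : 'I_(size s),
      forall i j : 'I_(size s), c i j != 0 -> [/\ E i I, E j J & (i < j)%N].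
Hypothesis hstep : forall i j : 'I_(size s), E i j -> sz s i = sz s j.
Hypothesis Gamma_mul : forall A B, Gamma E geqs A -> Gamma E geqs B -> Gamma E geqs (A *m B).
Variable (meqs : seq 'M[k]_(size s)).
Hypothesis meqs_ok : forall d, d \in meqs -> exists I J : 'I_(size s),
      forall i j : 'I_(size s), d i j != 0 -> E i I /\ E j J.
Hypothesis GM : forall A m, Gamma E geqs A -> Mset meqs m -> Mset meqs (A *m m).
Hypothesis MG : forall A m, Gamma E geqs A -> Mset meqs m -> Mset meqs (m *m A).

Lemma reach_inv (M0 : 'M[k]_(sumn s)) s' M' L' :
  reach lt s M0 (fun S => Gamma_nn E geqs S) s' M' L' -> M_nn meqs M0 ->
  refines s' s /\ M_nn meqs M' /\ (forall S, L' S -> Gamma_nn E geqs S).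
Proof.
move=> hr hM0; elim: hr => [|s1 M1 L1 s2 M2 L2 _ [hre [hM hL]] hst].
  by split; [exact: refines_refl | split].
case: hst => l [r [_ [-> [S [hS [hu [-> hcase]]]]]]].
split; last split.
- apply: refines_trans _ hre.
  case: hcase => [[_ [_ [_ ->]]]| [_ [hne [rk [hrk [_ hsub]]]]] |
                  [_ [_ [data [hok [hws [_ hsub]]]]]]].
  + exact: refines_refl.
  + apply: subdiv_refines hsub => i hi [e _] /=; rewrite e; lia.
  + apply: subdiv_refines hsub => // i hi [e _].
    by rewrite (sumn_stdpart hok) hws e.
- exact: (MNconj geqs_ok hstep Gamma_mul meqs_ok GM MG (hL _ hS) hu hM).
- by move=> T [hT _]; apply: hL.
Qed.

End Main.

Unset Implicit Arguments.

Theorem lemma2p2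
  (k : closedFieldType)
  (* the fixed linear order on k *)
  (lt : rel k)
  (lt_irr : forall x, ~~ lt x x)
  (lt_trans : forall x y z, lt x y -> lt y z -> lt x z)
  (lt_total : forall x y, x != y -> lt x y || lt y x)
  (t : nat)
  (* the basic matrix algebra Gamma: equivalence E and equations geqs *)
  (E : rel 'I_t)
  (E_refl : forall i, E i i)
  (E_sym : forall i j, E i j -> E j i)
  (E_trans : forall i j l, E i j -> E j l -> E i l)
  (geqs : seq 'M[k]_t)
  (geqs_ok : forall c, c \in geqs -> exists I J : 'I_t,
      forall i j : 'I_t, c i j != 0 -> [/\ E i I, E j J & (i < j)%N])
  (Gamma_mul : forall A B, Gamma E geqs A -> Gamma E geqs B -> Gamma E geqs (A *m B))
  (* the space M, given by the system meqs *)
  (meqs : seq 'M[k]_t)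
  (meqs_ok : forall d, d \in meqs -> exists I J : 'I_t,
      forall i j : 'I_t, d i j != 0 -> E i I /\ E j J)
  (GM : forall A m, Gamma E geqs A -> Mset meqs m -> Mset meqs (A *m m))
  (MG : forall A m, Gamma E geqs A -> Mset meqs m -> Mset meqs (m *m A))
  (* result of Gauss--Jordan elimination: dependent positions Nd, coefficients c *)
  (Nd : rel 'I_t)
  (c : 'I_t -> 'I_t -> 'M[k]_t)
  (hGJ : forall m, Mset meqs m <->
      (forall l r : 'I_t, Nd l r ->
         m l r = \sum_(i : 'I_t) \sum_(j : 'I_t | ~~ Nd i j) c l r i j * m i j))
  (hc : forall l r i j : 'I_t, Nd l r -> ~~ Nd i j -> c l r i j != 0 ->
      [/\ E i l, E j r & lhd i j l r])
  (* a step-sequence *)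
  (ns : seq nat)
  (ns_size : size ns = t)
  (ns_step : forall i j : 'I_t, E i j -> sz ns i = sz ns j) :
  (forall A : 'M[k]_(sumn ns), M_nn meqs A <->
     (forall l r : 'I_t, Nd l r -> forall a b, (a < sz ns l)%N -> (b < sz ns r)%N ->
        blk ns A l r a b =
        \sum_(i : 'I_t) \sum_(j : 'I_t | ~~ Nd i j) c l r i j * blk ns A i j a b))
  /\
  (forall M : 'M[k]_(sumn ns), M_nn meqs M ->
   forall s' M' L', reach lt ns M (fun S => Gamma_nn E geqs S) s' M' L' ->
   forall l r, firstns s' M' L' l r ->
   exists i j : 'I_t, ~~ Nd i j /\
     (soff ns i <= soff s' l)%N /\ (soff s' l + sz s' l <= soff ns i + sz ns i)%N /\
     (soff ns j <= soff s' r)%N /\ (soff s' r + sz s' r <= soff ns j + sz ns j)%N).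
Proof.
subst t.
have MN := M_nn_sc meqs_ok ns_step.
have P1 : forall A : 'M[k]_(sumn ns), M_nn meqs A <->
     (forall l r : 'I_(size ns), Nd l r -> forall a b, (a < sz ns l)%N -> (b < sz ns r)%N ->
        blk ns A l r a b =
        \sum_(i : 'I_(size ns)) \sum_(j : 'I_(size ns) | ~~ Nd i j) c l r i j * blk ns A i j a b).
  move=> A; split.
    move=> /MN h l r hN a b.
    by have /hGJ /(_ l r hN) /(part1_pt ns_step hc A a b hN) := h a b.
  move=> h; apply/MN => a b; apply/hGJ => l r hN.
  by apply/(part1_pt ns_step hc A a b hN); apply: h.
split; first exact: P1.
move=> M0 hM0 s' M' L' hreach l r [hl [hr [hns hst]]].
have [[hsum href] [hM' hL']] := reach_inv geqs_ok ns_step Gamma_mul meqs_ok GM MG hreach hM0.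
have szl : (0 < sz s' l)%N.
  rewrite lt0n; apply/negP => /eqP z; apply: hns => S _ _ a b; by rewrite z.
have szr : (0 < sz s' r)%N.
  rewrite lt0n; apply/negP => /eqP z; apply: hns => S _ _ a b _; by rewrite z.
have [l0 hl0 [il1 il2]] := href l hl szl.
have [r0 hr0 [ir1 ir2]] := href r hr szr.
exists (Ordinal hl0), (Ordinal hr0) => /=.
split; last by [].
apply/negP => hN; apply: hns => S hS hu a b ha hb.
set X := invmx S *m M' *m S.
have hX : M_nn meqs X.
  exact: (MNconj geqs_ok ns_step Gamma_mul meqs_ok GM MG (hL' _ hS) hu hM').
set p := (soff s' l + a)%N; set q := (soff s' r + b)%N.
set a0 := (p - soff ns l0)%N; set b0 := (q - soff ns r0)%N.
have ha0 : (a0 < sz ns l0)%N by rewrite /a0 /p; lia.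
have hb0 : (b0 < sz ns r0)%N by rewrite /b0 /q; lia.
have eblk : forall Y : 'M[k]_(sumn ns), blk s' Y l r a b =
    blk ns Y (Ordinal hl0) (Ordinal hr0) a0 b0.
  by move=> Y; rewrite /blk /= /a0 /b0 /p /q !subnKC //; lia.
rewrite !eblk.
have := (proj1 (P1 X) hX) _ _ hN a0 b0 ha0 hb0; rewrite /= => ->.
have := (proj1 (P1 M') hM') _ _ hN a0 b0 ha0 hb0; rewrite /= => ->.
apply: eq_bigr => i _; apply: eq_bigr => j hj.
have [->|nz] := eqVneq (c (Ordinal hl0) (Ordinal hr0) i j) 0; first by rewrite !mul0r.
have [ei ej hlhd] := hc _ _ _ _ hN hj nz.
congr (_ * _).
have szi := ns_step _ _ ei; have szj := ns_step _ _ ej; rewrite /= in szi szj.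
set P := (soff ns i + a0)%N; set Q := (soff ns j + b0)%N.
have hP : (P < sumn s')%N.
  rewrite hsum /P; have := soffSsum ns i; rewrite szi; lia.
have hQ : (Q < sumn s')%N.
  rewrite hsum /Q; have := soffSsum ns j; rewrite szj; lia.
have [v hv [v1 v2]] := locate hP.
have [w hw [w1 w2]] := locate hQ.
have stvw : stable s' M' L' v w.
  apply: hst => //.
  case/orP: hlhd => /= [hi | /andP [/eqP ei' hj']].
    left; case: (ltnP l v) => // hvl.
    have h1 := strip_lt ns hi.
    have : (soff s' v + sz s' v <= soff s' l + sz s' l)%N.
      by rewrite -!soffS soff_mono.
    rewrite /P in v2; lia.
  right; split.
    have ePp : P = p by rewrite /P ei' /= /a0 /p; lia.
    case: (ltngtP v l) => [hvl|hvl|//].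
      have := strip_lt s' hvl; rewrite ePp /p in v1 v2; lia.
    have := strip_lt s' hvl; rewrite ePp /p in v1 v2; lia.
  case: (ltnP w r) => // hrw.
  have h1 := strip_lt ns hj'; have h2 := soff_mono s' hrw.
  rewrite /Q in w2; rewrite /= in h1; lia.
have hA : (P - soff s' v < sz s' v)%N by lia.
have hB : (Q - soff s' w < sz s' w)%N by lia.
have := stvw S hS hu _ _ hA hB; rewrite /blk !subnKC //.
Qed.
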